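(* Let $K$ be a field of characteristic $0$ and $\mathcal{H}$ a finite-dimensional associative $K$-algebra with $1$ which is split semisimple and symmetric with trace form $\tau\colon\mathcal{H}\to K$, and let $\dagger\colon\mathcal{H}\to\mathcal{H}$, $h\mapsto h^\dagger$, be a $K$-linear anti-involution. Assume $B_0$ is a $\dagger$-symmetric basis of $\mathcal{H}$. For a simple $\mathcal{H}$-module $E$ define $$\nu_E:=\frac{1}{c_E\dim E}\sum_{b\in B_0}\chi_E(b^2).$$ Then $\nu_E\in\{0,\pm1\}$, and: (a) $\nu_E=0$ if and only if $E\not\cong\hat E$; (b) $\nu_E=1$ if and only if $E\cong\hat E$ and there exists a non-degenerate symmetric $\mathcal{H}$-invariant bilinear form on $E$; (c) $\nu_E=-1$ if and only if $E\cong\hat E$ and there exists a non-degenerate alternating $\mathcal{H}$-invariant bilinear form on $E$. In particular $\nu_E$ does not depend on the choice of $B_0$.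
   Context: $\mathrm{Irr}(\mathcal{H})$ denotes the set of simple $\mathcal{H}$-modules up to isomorphism; $\chi_E(h)=\mathrm{trace}(h,E)$. The Schur elements $c_E\in K\setminus\{0\}$ are defined by $\tau=\sum_{E\in\mathrm{Irr}(\mathcal{H})}c_E^{-1}\chi_E$. The contragredient $\hat M$ of a finite-dimensional left $\mathcal{H}$-module $M$ is $\mathrm{Hom}_K(M,K)$ with $(h.f)(m)=f(h^\dagger.m)$. A bilinear form $(\,,)$ on $M$ is $\mathcal{H}$-invariant if $(h.m,m')=(m,h^\dagger.m')$ for all $h\in\mathcal{H}$, $m,m'\in M$. For a basis $B$ of $\mathcal{H}$, the dual basis $B^\vee=\{b^\vee\}$ is defined by $\tau(b'b^\vee)=\delta_{b,b'}$. A basis $B_0$ is $\dagger$-symmetric if $b^\dagger=b^\vee$ for all $b\in B_0$. *)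

(* Defs.v *)
From HB Require Import structures.
From mathcomp Require Import all_boot all_order all_algebra.
From mathcomp Require Import falgebra.
Set Implicit Arguments. Unset Strict Implicit. Unset Printing Implicit Defensive.
Import GRing.Theory.
Local Open Scope ring_scope.

Section HeckeDefs.
Variables (K : fieldType) (H : falgType K).

Definition symmetrizing_trace (tau : H -> K) : Prop :=
  (forall (a : K) (x y : H), tau (a *: x + y) = a * tau x + tau y) /\
  (forall x y : H, tau (x * y) = tau (y * x)) /\
  (forall x : H, (forall y : H, tau (x * y) = 0) -> x = 0).

Definition anti_involution (dag : H -> H) : Prop :=
  (forall (a : K) (x y : H), dag (a *: x + y) = a *: dag x + dag y) /\
  (forall x y : H, dag (x * y) = dag y * dag x) /\
  (forall x : H, dag (dag x) = x).

Definition left_ideal (L : {vspace H}) : Prop :=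
  forall h x : H, x \in L -> h * x \in L.

(* H semisimple: the regular left module is semisimple, i.e. every left
   ideal has a complementary left ideal. *)
Definition semisimple_alg : Prop :=
  forall L : {vspace H}, left_ideal L ->
    exists2 L' : {vspace H}, left_ideal L' &
      ((L + L')%VS = fullv /\ (L :&: L')%VS = 0%VS).

(* A finite-dimensional left H-module of dimension d written in a K-basis:
   an algebra morphism rho : H -> 'M[K]_d, h acting on column vectors
   v : 'cV_d by v |-> rho h *m v. *)
Definition is_rep (d : nat) (rho : H -> 'M[K]_d) : Prop :=
  (forall (a : K) (x y : H), rho (a *: x + y) = a *: rho x + rho y) /\
  rho 1 = 1%:M /\
  (forall x y : H, rho (x * y) = rho x *m rho y).

(* Submodules: a subspace of K^d, given as the row space of U whose rows are
   the transposes of the vectors of the subspace, stable under the action. *)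
Definition rep_submodule (d : nat) (rho : H -> 'M[K]_d) (U : 'M[K]_d) : Prop :=
  forall h : H, (U *m (rho h)^T <= U)%MS.

Definition rep_simple (d : nat) (rho : H -> 'M[K]_d) : Prop :=
  is_rep rho /\ (0 < d)%N /\
  forall U : 'M[K]_d, rep_submodule rho U -> U = 0 \/ (1%:M <= U)%MS.

Definition rep_iso (d1 d2 : nat) (rho1 : H -> 'M[K]_d1) (rho2 : H -> 'M[K]_d2)
  : Prop :=
  exists P : 'M[K]_(d2, d1),
    [/\ row_free P, row_full P & forall h : H, P *m rho1 h = rho2 h *m P].

Definition split_semisimple_alg : Prop :=
  semisimple_alg /\
  forall (d : nat) (rho : H -> 'M[K]_d), rep_simple rho ->
    forall A : 'M[K]_d, (forall h : H, A *m rho h = rho h *m A) ->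
      exists a : K, A = a%:M.

Definition rep_char (d : nat) (rho : H -> 'M[K]_d) (h : H) : K := \tr (rho h).

(* contragredient module Hom_K(E,K), (h.f)(m) = f(h^dag.m), written in the
   dual basis: a functional f is a column vector with f(m) = f^T m, so
   h.f = (rho (h^dag))^T *m f. *)
Definition contragredient (dag : H -> H) (d : nat) (rho : H -> 'M[K]_d)
  : H -> 'M[K]_d := fun h => (rho (dag h))^T.

Definition bform (d : nat) (M : 'M[K]_d) (v w : 'cV[K]_d) : K :=
  (v^T *m M *m w) 0 0.

Definition bform_nondegenerate (d : nat) (M : 'M[K]_d) : Prop :=
  (forall v, (forall w, bform M v w = 0) -> v = 0) /\
  (forall w, (forall v, bform M v w = 0) -> w = 0).

Definition bform_symmetric (d : nat) (M : 'M[K]_d) : Prop :=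
  forall v w, bform M v w = bform M w v.

Definition bform_alternating (d : nat) (M : 'M[K]_d) : Prop :=
  forall v, bform M v v = 0.

Definition bform_invariant (dag : H -> H) (d : nat) (rho : H -> 'M[K]_d)
  (M : 'M[K]_d) : Prop :=
  forall (h : H) (v w : 'cV[K]_d),
    bform M (rho h *m v) w = bform M v (rho (dag h) *m w).

(* B is a dag-symmetric basis w.r.t. tau: B is a basis of H and
   b^dag = b^vee for all b, where the dual basis is characterised by
   tau(b' b^vee) = delta_{b,b'}. *)
Definition dag_symmetric_basis (tau : H -> K) (dag : H -> H) (B : seq H)
  : Prop :=
  basis_of fullv B /\
  forall i j : nat, (i < size B)%N -> (j < size B)%N ->
    tau (B`_i * dag B`_j) = (i == j)%:R.

Definition nu (B : seq H) (c : K) (d : nat) (rho : H -> 'M[K]_d) : K :=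
  (c * d%:R)^-1 * \sum_(b <- B) rep_char rho (b * b).

End HeckeDefs.

(* Main.v *)
Require Import Defs.
From HB Require Import structures.
From mathcomp Require Import all_boot all_order all_algebra.
From mathcomp Require Import falgebra.
From mathcomp Require Import ring.
From Stdlib Require Import Classical_Prop.
Set Implicit Arguments. Unset Strict Implicit. Unset Printing Implicit Defensive.
Import GRing.Theory.
Local Open Scope ring_scope.

Section Lin.
Variables (K : fieldType) (V W : lmodType K) (f : V -> W).
Hypothesis hf : forall a x y, f (a *: x + y) = a *: f x + f y.
Lemma lf0 : f 0 = 0.
Proof.
have := hf 1 0 0; rewrite scaler0 addr0 scale1r.
by rewrite -{1}(addr0 (f 0)) => /addrI ->.
Qed.
Lemma lfD x y : f (x + y) = f x + f y.
Proof. by have := hf 1 x y; rewrite !scale1r. Qed.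
Lemma lfZ a x : f (a *: x) = a *: f x.
Proof. by have := hf a x 0; rewrite !addr0 lf0 addr0. Qed.
Lemma lf_sum (I : Type) (r : seq I) (P : pred I) (F : I -> V) :
  f (\sum_(i <- r | P i) F i) = \sum_(i <- r | P i) f (F i).
Proof. exact: (big_morph f lfD lf0). Qed.
End Lin.

Section LinK.
Variables (K : fieldType) (V : lmodType K) (f : V -> K).
Hypothesis hf : forall a x y, f (a *: x + y) = a * f x + f y.
Lemma tf0 : f 0 = 0.
Proof.
have := hf 1 0 0; rewrite scaler0 addr0 mul1r.
by rewrite -{1}(addr0 (f 0)) => /addrI ->.
Qed.
Lemma tfD x y : f (x + y) = f x + f y.
Proof. by have := hf 1 x y; rewrite scale1r mul1r. Qed.
Lemma tfZ a x : f (a *: x) = a * f x.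
Proof. by have := hf a x 0; rewrite !addr0 tf0 addr0. Qed.
Lemma tf_sum (I : Type) (r : seq I) (P : pred I) (F : I -> V) :
  f (\sum_(i <- r | P i) F i) = \sum_(i <- r | P i) f (F i).
Proof. exact: (big_morph f tfD tf0). Qed.
End LinK.

Lemma mul_delta (K : fieldType) m1 m2 m3 m4 (M : 'M[K]_(m1, m2)) (j : 'I_m2) (p : 'I_m3)
  (N : 'M[K]_(m3, m4)) u v :
  (M *m delta_mx j p *m N) u v = M u j * N p v.
Proof.
rewrite !mxE (bigD1 p) //= big1 ?addr0; last first.
  move=> k /negbTE nk; rewrite !mxE (bigD1 j) //= big1 ?addr0.
    by rewrite !mxE eqxx nk /= mulr0 mul0r.
  by move=> l /negbTE nl; rewrite !mxE nl /= mulr0.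
rewrite !mxE (bigD1 j) //= big1 ?addr0; first by rewrite !mxE !eqxx mulr1.
by move=> l /negbTE nl; rewrite !mxE nl /= mulr0.
Qed.


Section Alg.
Variables (K : fieldType) (H : falgType K) (tau : H -> K) (dag : H -> H).
Hypothesis Htau : symmetrizing_trace tau.
Hypothesis Hdag : anti_involution dag.
Variable B : seq H.
Hypothesis HB : dag_symmetric_basis tau dag B.

Let tauL := Htau.1.
Let tauC := Htau.2.1.
Let tauN := Htau.2.2.

Lemma tau_db (i j : 'I_(size B)) : tau (B`_i * dag B`_j) = (i == j)%:R.
Proof. by rewrite HB.2. Qed.

Lemma exp_basis x : exists a : 'I_(size B) -> K, x = \sum_i a i *: B`_i.
Proof.
exists (fun i => coord (in_tuple B) i x).
by apply: (coord_basis (U := fullv)); [exact: HB.1 | exact: memvf].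
Qed.

Lemma exp1 x : x = \sum_(i < size B) tau (x * dag B`_i) *: B`_i.
Proof.
have [a Ex] := exp_basis x.
have Hc (i : 'I_(size B)) : tau (x * dag B`_i) = a i.
  rewrite {1}Ex mulr_suml (tf_sum tauL).
  under eq_bigr do rewrite -scalerAl (tfZ tauL) tau_db.
  rewrite (bigD1 i) //= eqxx mulr1 big1 ?addr0 // => j /negbTE ->.
  by rewrite mulr0.
by under eq_bigr do rewrite Hc.
Qed.

Lemma exp2 x : x = \sum_(i < size B) tau (B`_i * x) *: dag B`_i.
Proof.
set y := x - \sum_(i < size B) tau (B`_i * x) *: dag B`_i.
suff: y = 0 by move/eqP; rewrite subr_eq0 => /eqP.
have Hj (j : 'I_(size B)) : tau (B`_j * y) = 0.
  rewrite /y mulrBr (tfD tauL) -scaleN1r (tfZ tauL) mulr_sumr (tf_sum tauL).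
  under eq_bigr do rewrite -scalerAr (tfZ tauL) tau_db.
  rewrite (bigD1 j) //= eqxx mulr1 big1 ?addr0; first by rewrite mulN1r subrr.
  by move=> i; rewrite eq_sym => /negbTE ->; rewrite mulr0.
apply: tauN => z.
have [a ->] := exp_basis z.
rewrite tauC mulr_suml (tf_sum tauL) big1 // => i _.
by rewrite -scalerAl (tfZ tauL) Hj mulr0.
Qed.

Definition linmul m (f : H -> 'M[K]_m) :=
  (forall a x y, f (a *: x + y) = a *: f x + f y) /\
  (forall x y, f (x * y) = f x *m f y).

Lemma fexp1 m (f : H -> 'M[K]_m) : linmul f -> forall x,
  f x = \sum_(i < size B) tau (x * dag B`_i) *: f B`_i.
Proof.
move=> [fl _] x; rewrite {1}(exp1 x) (lf_sum fl).
by under eq_bigr do rewrite (lfZ fl).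
Qed.

Lemma fexp2 m (f : H -> 'M[K]_m) : linmul f -> forall x,
  f x = \sum_(i < size B) tau (B`_i * x) *: f (dag B`_i).
Proof.
move=> [fl _] x; rewrite {1}(exp2 x) (lf_sum fl).
by under eq_bigr do rewrite (lfZ fl).
Qed.

Definition Xf m1 m2 (f1 : H -> 'M[K]_m1) (f2 : H -> 'M[K]_m2) (A : 'M[K]_(m1, m2)) :=
  \sum_(i < size B) f1 B`_i *m A *m f2 (dag B`_i).

Lemma intertwine m1 m2 (f1 : H -> 'M[K]_m1) (f2 : H -> 'M[K]_m2) A h :
  linmul f1 -> linmul f2 -> f1 h *m Xf f1 f2 A = Xf f1 f2 A *m f2 h.
Proof.
move=> L1 L2.
transitivity (\sum_(i < size B) \sum_(j < size B)
   tau (h * B`_i * dag B`_j) *: (f1 B`_j *m A *m f2 (dag B`_i))).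
  rewrite /Xf mulmx_sumr; apply: eq_bigr => i _.
  rewrite !mulmxA -L1.2 (fexp1 L1 (h * B`_i)) !mulmx_suml.
  by apply: eq_bigr => j _; rewrite !scalemxAl.
rewrite exchange_big /=.
transitivity (\sum_(j < size B) \sum_(i < size B)
   tau (B`_i * (dag B`_j * h)) *: (f1 B`_j *m A *m f2 (dag B`_i))).
  apply: eq_bigr => j _; apply: eq_bigr => i _.
  by rewrite [in RHS]mulrA [in RHS]tauC mulrA.
rewrite /Xf mulmx_suml; apply: eq_bigr => j _.
rewrite -!mulmxA -L2.2 (fexp2 L2 (dag B`_j * h)) !mulmx_sumr.
by apply: eq_bigr => i _; rewrite -!scalemxAr !mulmxA.
Qed.

Lemma Xf_sum m1 m2 (f1 : H -> 'M[K]_m1) (f2 : H -> 'M[K]_m2) (I : Type) (r : seq I)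
  (F : I -> 'M[K]_(m1, m2)) :
  Xf f1 f2 (\sum_(x <- r) F x) = \sum_(x <- r) Xf f1 f2 (F x).
Proof.
rewrite /Xf; under eq_bigr do rewrite mulmx_sumr mulmx_suml.
exact: exchange_big.
Qed.

Lemma XfZ m1 m2 (f1 : H -> 'M[K]_m1) (f2 : H -> 'M[K]_m2) a A :
  Xf f1 f2 (a *: A) = a *: Xf f1 f2 A.
Proof.
rewrite /Xf scaler_sumr; apply: eq_bigr => i _.
by rewrite -[f1 _ *m (a *: A)]scalemxAr -scalemxAl.
Qed.

Lemma Xf_entry m1 m2 (f1 : H -> 'M[K]_m1) (f2 : H -> 'M[K]_m2) p q :
  \sum_(i < size B) \tr (f1 B`_i) * f2 (dag B`_i) p q =
  \sum_(j < m1) (Xf f1 f2 (delta_mx j p)) j q.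
Proof.
under [RHS]eq_bigr do rewrite summxE.
rewrite exchange_big /=; apply: eq_bigr => i _.
rewrite /mxtrace mulr_suml; apply: eq_bigr => j _.
by rewrite mul_delta.
Qed.

End Alg.


Section Schur.
Variables (K : fieldType) (H : falgType K).

Lemma rep_linmul d (r : H -> 'M[K]_d) : is_rep r -> linmul r.
Proof. by case=> [L [_ M]]. Qed.

Lemma contra_linmul (dag : H -> H) d (r : H -> 'M[K]_d) :
  anti_involution dag -> is_rep r -> linmul (contragredient dag r).
Proof.
move=> [dL [dM _]] [rL [_ rM]]; split.
  by move=> a x y; rewrite /contragredient dL rL linearD linearZ.
by move=> x y; rewrite /contragredient dM rM trmx_mul.
Qed.

Lemma schur_img d1 (r1 : H -> 'M[K]_d1) m2 (f2 : H -> 'M[K]_m2) (G : 'M[K]_(d1, m2)) :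
  rep_simple r1 -> (forall h, r1 h *m G = G *m f2 h) -> G = 0 \/ row_free G.
Proof.
move=> [_ [_ Hsub]] HG.
have e : (<<G^T>> <= G^T)%MS by rewrite genmxE.
have sub : rep_submodule r1 <<G^T>>%MS.
  move=> h; apply: submx_trans (submxMr _ e) _.
  by rewrite -trmx_mul HG trmx_mul genmxE submxMl.
have [U0|U1] := Hsub _ sub.
- left; apply: trmx_inj; rewrite trmx0; apply/eqP.
  have e2 : (G^T <= <<G^T>>)%MS by rewrite genmxE.
  by rewrite -submx0 (submx_trans e2) // U0.
- right; move: U1; rewrite genmxE sub1mx /row_full /row_free mxrank_tr.
  done.
Qed.

Lemma schur_ker m1 (f1 : H -> 'M[K]_m1) d2 (r2 : H -> 'M[K]_d2) (G : 'M[K]_(m1, d2)) :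
  rep_simple r2 -> (forall h, f1 h *m G = G *m r2 h) -> G = 0 \/ row_full G.
Proof.
move=> [_ [_ Hsub]] HG.
have sub : rep_submodule r2 (kermx G^T).
  move=> h; rewrite sub_kermx -mulmxA -trmx_mul -HG trmx_mul mulmxA.
  by rewrite mulmx_ker mul0mx.
have [U0|U1] := Hsub _ sub.
- right; move: (mxrank_ker G^T); rewrite U0 mxrank0 mxrank_tr => /esym/eqP.
  rewrite subn_eq0 /row_full => le; rewrite eqn_leq le andbT.
  by rewrite -mxrank_tr rank_leq_row.
- left; apply: trmx_inj; rewrite trmx0.
  by move: U1; rewrite sub_kermx mul1mx => /eqP.
Qed.

End Schur.


Section Rel.
Variables (K : fieldType) (H : falgType K) (tau : H -> K) (dag : H -> H).
Hypothesis Hsplit : split_semisimple_alg H.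
Hypothesis Htau : symmetrizing_trace tau.
Hypothesis Hdag : anti_involution dag.
Variable B : seq H.
Hypothesis HB : dag_symmetric_basis tau dag B.
Variables (I : finType) (d : I -> nat) (rho : forall i : I, H -> 'M[K]_(d i)).
Hypothesis Hsimple : forall i : I, rep_simple (rho i).
Hypothesis Hdistinct : forall i j : I, rep_iso (rho i) (rho j) -> i = j.
Variables (c : I -> K).
Hypothesis Hc0 : forall i : I, c i != 0.
Hypothesis Hschur : forall h : H, tau h = \sum_(i : I) (c i)^-1 * rep_char (rho i) h.
Variable E : I.

Let LM i : linmul (rho i) := rep_linmul (Hsimple i).1.

Local Notation X i A := (Xf dag B (rho i) (rho E) A).

Lemma X_zero i (A : 'M[K]_(d i, d E)) : i != E -> X i A = 0.
Proof.
move=> niE.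
have Hi h : rho i h *m X i A = X i A *m rho E h by apply: (intertwine Htau HB); apply: LM.
have [//|rf] := schur_img (Hsimple i) Hi.
have [//|rF] := schur_ker (Hsimple E) Hi.
suff: E = i by move=> eE; rewrite eE eqxx in niE.
apply: Hdistinct; exists (X i A); split => // h.
Qed.

Lemma X_scalar (A : 'M[K]_(d E)) : exists a, X E A = a%:M.
Proof.
apply: Hsplit.2 (Hsimple E) _ _ => h.
by rewrite (intertwine Htau HB) //; apply: LM.
Qed.

Lemma scal_entry n (M : 'M[K]_n) u v : (exists a, M = a%:M) -> M u v = M v v *+ (u == v).
Proof. by move=> [a ->]; rewrite !mxE eqxx mulr1n. Qed.

Lemma key_entry (p q : 'I_(d E)) :
  (1%:M : 'M[K]_(d E)) p q = (c E)^-1 * \sum_j (X E (delta_mx j p)) j q.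
Proof.
have [_ [r1 _]] := (Hsimple E).1.
rewrite -r1 (fexp2 Htau HB (LM E) 1) summxE.
under eq_bigr do rewrite mxE mulr1 Hschur mulr_suml.
rewrite exchange_big /= (bigD1 E) //=.
have T k : \sum_(i < size B) (c k)^-1 * rep_char (rho k) B`_i * rho E (dag B`_i) p q
   = (c k)^-1 * \sum_j (X k (delta_mx j p)) j q.
  rewrite -Xf_entry mulr_sumr; apply: eq_bigr => i _.
  by rewrite /rep_char mulrA.
rewrite T [Y in _ + Y]big1 ?addr0 // => k kE.
by rewrite T big1 ?mulr0 // => j _; rewrite X_zero // mxE.
Qed.

Lemma XE_delta (j k : 'I_(d E)) : X E (delta_mx j k) = (c E * (j == k)%:R)%:M.
Proof.
have [a Ea] := X_scalar (delta_mx j k).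
have := key_entry k j.
rewrite (bigD1 j) //= big1 ?addr0; last first.
  by move=> u /negbTE nu; rewrite (scal_entry _ _ (X_scalar _)) nu mulr0n.
rewrite Ea !mxE eqxx mulr1n => e.
by rewrite eq_sym e mulrA mulfV ?mul1r.
Qed.

Lemma XE_lin (A : 'M[K]_(d E)) : X E A = (c E * \tr A)%:M.
Proof.
rewrite {1}(matrix_sum_delta A) Xf_sum.
under eq_bigr do rewrite Xf_sum.
transitivity (\sum_(j < d E) ((A j j * c E)%:M : 'M[K]_(d E))).
  apply: eq_bigr => j _; rewrite (bigD1 j) //= big1 ?addr0.
    by rewrite XfZ XE_delta eqxx mulr1 scale_scalar_mx.
  by move=> k /negbTE nk; rewrite XfZ XE_delta eq_sym nk mulr0 scale_scalar_mx mulr0 raddf0.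
rewrite -(raddf_sum (@scalar_mx K (d E))) /mxtrace mulr_sumr.
by congr (_%:M); apply: eq_bigr => j _; rewrite mulrC.
Qed.


Local Notation rE := (rho E).
Local Notation rc := (contragredient dag (rho E)).

Let LMc : linmul rc := contra_linmul Hdag (Hsimple E).1.

Lemma S_nu : nu B (c E) rE =
  (c E * (d E)%:R)^-1 * \sum_p \sum_u (Xf dag B rE rc (delta_mx u p)) p u.
Proof.
rewrite /nu (big_nth 0) big_mkord; congr (_ * _).
have [_ [_ rM]] := (Hsimple E).1.
transitivity (\sum_(i < size B) \sum_p \sum_u
    (rE B`_i *m delta_mx u p *m rc (dag B`_i)) p u).
  apply: eq_bigr => i _; rewrite /rep_char rM /mxtrace; apply: eq_bigr => p _.
  rewrite mxE; apply: eq_bigr => u _.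
  by rewrite mul_delta /contragredient Hdag.2.2 mxE.
rewrite exchange_big; apply: eq_bigr => p _ /=.
rewrite exchange_big; apply: eq_bigr => u _ /=.
by rewrite summxE.
Qed.

Lemma nu_noniso : ~ rep_iso rE rc -> nu B (c E) rE = 0.
Proof.
move=> nI; rewrite S_nu.
suff G0 A : Xf dag B rE rc A = 0.
  by rewrite big1 ?mulr0 // => p _; rewrite big1 // => u _; rewrite G0 mxE.
have Hi h : rE h *m Xf dag B rE rc A = Xf dag B rE rc A *m rc h.
  by apply: (intertwine Htau HB).
have [//|rf] := schur_img (Hsimple E) Hi.
exfalso; apply: nI.
set G := Xf dag B rE rc A in Hi rf *.
have Gu : G \in unitmx by rewrite -row_free_unit.
exists (invmx G); split.
- by rewrite row_free_unit unitmx_inv.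
- by rewrite row_full_unit unitmx_inv.
- move=> h.
  by rewrite -[invmx G *m _](mulmxK Gu) -(mulmxA _ _ G) Hi mulmxA mulVmx // mul1mx.
Qed.

Lemma tr_delta n (u p : 'I_n) (P : 'M[K]_n) : \tr (delta_mx u p *m P) = P p u.
Proof.
rewrite -[delta_mx u p]mul1mx /mxtrace (bigD1 u) //= big1 ?addr0.
  by rewrite mul_delta !mxE eqxx mul1r.
by move=> k /negbTE nk; rewrite mul_delta !mxE nk mul0r.
Qed.

Lemma nu_iso (P : 'M[K]_(d E)) a : (d E)%:R != 0 :> K ->
  [/\ row_free P, row_full P & forall h, P *m rE h = rc h *m P] ->
  P^T = a *: P -> nu B (c E) rE = a.
Proof.
move=> hd [rf _ HP] PT.
have Pu : P \in unitmx by rewrite -row_free_unit.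
have hc h : rc h = P *m rE h *m invmx P by rewrite HP mulmxK.
have GE A : Xf dag B rE rc A = (c E * \tr (A *m P)) *: invmx P.
  rewrite /Xf; under eq_bigr => i _ do rewrite hc !mulmxA -(mulmxA (rE B`_i) A P).
  rewrite -mulmx_suml.
  by rewrite -/(Xf dag B rE rE (A *m P)) XE_lin mul_scalar_mx.
rewrite S_nu.
transitivity ((c E * (d E)%:R)^-1 * (c E * \tr (P^T *m invmx P))).
  congr (_ * _); rewrite /mxtrace mulr_sumr exchange_big; apply: eq_bigr => u _ /=.
  rewrite mxE mulr_sumr; apply: eq_bigr => p _.
  by rewrite GE mxE tr_delta !mxE mulrA.
rewrite PT -scalemxAl mulmxV // mxtraceZ mxtrace1.
by field; rewrite hd Hc0.
Qed.

Lemma iso_sign : rep_iso rE rc -> exists P a,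
  [/\ [/\ row_free P, row_full P & forall h, P *m rE h = rc h *m P],
      P^T = a *: P & a = 1 \/ a = -1].
Proof.
move=> [P [rf rF HP]].
have Pu : P \in unitmx by rewrite -row_free_unit.
have PTh h : P^T *m rE h = (rE (dag h))^T *m P^T.
  have := HP (dag h); rewrite /contragredient Hdag.2.2 => e.
  by move: (congr1 trmx e); rewrite !trmx_mul trmxK => ->.
have inv h : invmx P *m (rE (dag h))^T = rE h *m invmx P.
  rewrite -[invmx P *m _](mulmxK Pu) -(mulmxA _ _ P).
  by rewrite -[_^T *m P]HP mulmxA mulVmx // mul1mx.
have [a Ea] : exists a, invmx P *m P^T = a%:M.
  apply: Hsplit.2 (Hsimple E) _ _ => h.
  by rewrite -mulmxA PTh mulmxA inv mulmxA.
have PTa : P^T = a *: P.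
  by rewrite -[P^T](mulKVmx Pu) Ea mul_mx_scalar.
exists P, a; split => //.
have dpos := (Hsimple E).2.1.
have P0 : P != 0.
  apply/eqP => P0; move: (mulmxV Pu); rewrite P0 mul0mx => /matrixP.
  by move/(_ (Ordinal dpos) (Ordinal dpos)); rewrite !mxE eqxx => /eqP; rewrite eq_sym oner_eq0.
have : (a * a - 1) *: P = 0.
  by rewrite scalerBl -scalerA -PTa -linearZ /= -PTa trmxK scale1r subrr.
move/eqP; rewrite scaler_eq0 (negbTE P0) orbF subr_eq0 -expr2 sqrf_eq1.
by case/orP => /eqP ->; [left|right].
Qed.

End Rel.


Section Forms.
Variable K : fieldType.
Variable n : nat.
Implicit Types (M N : 'M[K]_n) (v w : 'cV[K]_n).

Lemma rowzero (x : 'rV[K]_n) : (forall w : 'cV[K]_n, (x *m w) 0 0 = 0) -> x = 0.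
Proof.
move=> Hx; apply/matrixP => i k; rewrite (ord1 i) !mxE.
have := Hx (delta_mx k 0); rewrite -[x *m _]mulmx1 mul_delta !mxE eqxx mulr1.
done.
Qed.

Lemma bform_delta N (j k : 'I_n) : bform N (delta_mx j 0) (delta_mx k 0) = N j k.
Proof.
rewrite /bform trmx_delta -mulmxA -[delta_mx 0 j]mul1mx mul_delta.
by rewrite -[N *m _]mulmx1 mul_delta !mxE !eqxx mul1r mulr1.
Qed.

Lemma bform_eq M N : (forall v w, bform M v w = bform N v w) -> M = N.
Proof. by move=> e; apply/matrixP => j k; rewrite -!bform_delta e. Qed.

Lemma bform_L M (A : 'M[K]_n) v w : bform M (A *m v) w = bform (A^T *m M) v w.
Proof. by rewrite /bform trmx_mul !mulmxA. Qed.

Lemma bform_R M (A : 'M[K]_n) v w : bform M v (A *m w) = bform (M *m A) v w.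
Proof. by rewrite /bform !mulmxA. Qed.

Lemma bform_T M v w : bform M w v = bform M^T v w.
Proof.
rewrite /bform.
have <- : (w^T *m M *m v)^T = v^T *m M^T *m w by rewrite !trmx_mul trmxK mulmxA.
by rewrite [RHS]mxE.
Qed.

Lemma bformDl M v1 v2 w : bform M (v1 + v2) w = bform M v1 w + bform M v2 w.
Proof. by rewrite /bform linearD /= !mulmxDl mxE. Qed.

Lemma bformDr M v w1 w2 : bform M v (w1 + w2) = bform M v w1 + bform M v w2.
Proof. by rewrite /bform mulmxDr mxE. Qed.

Lemma bformN M v w : bform (- M) v w = - bform M v w.
Proof. by rewrite /bform mulmxN mulNmx mxE. Qed.

Lemma bform_invE (dag : Type) (r : dag -> 'M[K]_n) (dg : dag -> dag) M :
  (forall h v w, bform M (r h *m v) w = bform M v (r (dg h) *m w)) <->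
  (forall h, (r h)^T *m M = M *m r (dg h)).
Proof.
split=> [e h|e h v w]; last by rewrite bform_L bform_R e.
by apply: bform_eq => v w; rewrite -bform_L -bform_R e.
Qed.

Lemma unit_nondeg M : M \in unitmx -> bform_nondegenerate M.
Proof.
have key N v : N \in unitmx -> (forall w, bform N v w = 0) -> v = 0.
  move=> Nu e; apply: trmx_inj; rewrite trmx0.
  have : v^T *m N = 0 by apply: rowzero => w; rewrite -(e w).
  by move=> e0; rewrite -[v^T](mulmxK Nu) e0 mul0mx.
move=> Mu; split=> [v|w] e; first exact: key Mu e.
apply: (key M^T); first by rewrite unitmx_tr.
by move=> v; rewrite -bform_T.
Qed.

Lemma nondeg_unit M : bform_nondegenerate M -> M \in unitmx.
Proof.
move=> [nd _]; rewrite -row_free_unit -kermx_eq0.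
apply/negPn/negP => /rowV0Pn [u Hu Hu0].
have : u^T = 0.
  apply: nd => w; rewrite /bform trmxK.
  by move/sub_kermxP: Hu => ->; rewrite mul0mx mxE.
by move/(congr1 trmx); rewrite trmxK trmx0 => u0; rewrite u0 eqxx in Hu0.
Qed.

Lemma sym_T M : bform_symmetric M <-> M^T = M.
Proof.
split=> [e|e v w].
  by apply: bform_eq => v w; rewrite -bform_T e.
by rewrite bform_T e.
Qed.

Lemma alt_T M : (2%:R != 0 :> K) -> (bform_alternating M <-> M^T = - M).
Proof.
move=> two; split=> [e|e v].
  apply: bform_eq => v w; rewrite bformN -bform_T.
  have := e (v + w); rewrite bformDl !bformDr e e add0r addr0 => /eqP.
  by rewrite addrC addr_eq0 => /eqP.

have := bform_T M v v; rewrite e bformN => /eqP.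
rewrite -addr_eq0 -mulr2n -mulr_natr mulf_eq0 (negbTE two) orbF.
by move/eqP.
Qed.

End Forms.


Unset Implicit Arguments.
Set Strict Implicit.

Theorem proposition2p5
  (K : fieldType) (H : falgType K)
  (charK0 : [pchar K] =i pred0)
  (tau : H -> K) (dag : H -> H)
  (Hsplit : split_semisimple_alg H)
  (Htau : symmetrizing_trace tau)
  (Hdag : anti_involution dag)
  (B0 : seq H) (HB0 : dag_symmetric_basis tau dag B0)
  (I : finType) (d : I -> nat) (rho : forall i : I, H -> 'M[K]_(d i))
  (Hsimple : forall i : I, rep_simple (rho i))
  (Hdistinct : forall i j : I, rep_iso (rho i) (rho j) -> i = j)
  (Hcomplete : forall (n : nat) (sigma : H -> 'M[K]_n),
      rep_simple sigma -> exists i : I, rep_iso sigma (rho i))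
  (c : I -> K) (Hc0 : forall i : I, c i != 0)
  (Hschur : forall h : H, tau h = \sum_(i : I) (c i)^-1 * rep_char (rho i) h)
  (E : I) :
  let nuE := nu B0 (c E) (rho E) in
  [/\ nuE = 0 \/ nuE = 1 \/ nuE = -1,
      nuE = 0 <-> ~ rep_iso (rho E) (contragredient dag (rho E)),
      nuE = 1 <-> rep_iso (rho E) (contragredient dag (rho E)) /\
                  exists M : 'M[K]_(d E),
                    [/\ bform_nondegenerate M, bform_symmetric M
                      & bform_invariant dag (rho E) M],
      nuE = -1 <-> rep_iso (rho E) (contragredient dag (rho E)) /\
                  exists M : 'M[K]_(d E),
                    [/\ bform_nondegenerate M, bform_alternating M
                      & bform_invariant dag (rho E) M]
    & forall B1 : seq H, dag_symmetric_basis tau dag B1 ->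
        nu B1 (c E) (rho E) = nuE].
Proof.
move=> nuE.
have c0 := (pcharf0P _).1 charK0.
have hd : (d E)%:R != 0 :> K by rewrite c0 -lt0n (Hsimple E).2.1.
have two : 2%:R != 0 :> K by rewrite c0.
have NU (B : seq H) : dag_symmetric_basis tau dag B -> forall P a,
   [/\ row_free P, row_full P &
     forall h, P *m rho E h = contragredient dag (rho E) h *m P] ->
   P^T = a *: P -> nu B (c E) (rho E) = a.
  move=> HB P a HP PT.
  exact: (nu_iso Hsplit Htau Hdag HB Hsimple Hdistinct Hc0 Hschur hd HP PT).
have NN (B : seq H) : dag_symmetric_basis tau dag B ->
    ~ rep_iso (rho E) (contragredient dag (rho E)) -> nu B (c E) (rho E) = 0.
  by move=> HB; exact: (nu_noniso Htau Hdag HB Hsimple c).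
have inv_of_P (P : 'M[K]_(d E)) :
    (forall h, P *m rho E h = contragredient dag (rho E) h *m P) ->
    bform_invariant dag (rho E) P^T.
  move=> HP; apply/bform_invE => h.
  by move: (congr1 trmx (HP h)); rewrite /contragredient !trmx_mul trmxK.
have P_of_M (M : 'M[K]_(d E)) : bform_nondegenerate M ->
    bform_invariant dag (rho E) M ->
    [/\ row_free M^T, row_full M^T &
     forall h, M^T *m rho E h = contragredient dag (rho E) h *m M^T].
  move=> nd /bform_invE inv; have Mu := nondeg_unit nd.
  split; rewrite ?row_free_unit ?row_full_unit ?unitmx_tr //.
  by move=> h; move: (congr1 trmx (inv h)); rewrite /contragredient !trmx_mul trmxK.
case: (classic (rep_iso (rho E) (contragredient dag (rho E)))) => [Hiso|Hni];
  last first.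
  have n0 : nuE = 0 by exact: NN.
  rewrite n0; split.
  - by left.
  - by split.
  - split=> [/eqP|[]]; [by rewrite eq_sym oner_eq0 | done].
  - split=> [/eqP|[]]; [by rewrite eq_sym oppr_eq0 oner_eq0 | done].
  - by move=> B1 HB1; rewrite (NN B1 HB1 Hni).
have [P [a [HP PT a1]]] := iso_sign Hsplit Hdag Hsimple Hiso.
have na : nuE = a by exact: (NU B0 HB0 P a HP PT).
have [rfP rFP HPh] := HP.
have Pu : P \in unitmx by rewrite -row_free_unit.
split.
- by rewrite na; right.
- split=> [n0|/(_ Hiso) //].
  by exfalso; move: n0; rewrite na; case: a1 => -> /eqP; rewrite ?oppr_eq0 oner_eq0.
- split.
  + move=> n1; split=> //; exists P^T; split.
    * by apply: unit_nondeg; rewrite unitmx_tr.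
    * by apply/sym_T; rewrite trmxK PT -na n1 scale1r.
    * exact: inv_of_P.
  + move=> [_ [M [nd sy iv]]].
    have [rf' rF' H'] := P_of_M M nd iv.
    apply: (NU B0 HB0 M^T 1 (And3 rf' rF' H')).
    by rewrite trmxK scale1r ((sym_T M).1 sy).
- split.
  + move=> n1; split=> //; exists P^T; split.
    * by apply: unit_nondeg; rewrite unitmx_tr.
    * by apply/(alt_T _ two); rewrite trmxK PT -na n1 scaleN1r opprK.
    * exact: inv_of_P.
  + move=> [_ [M [nd al iv]]].
    have [rf' rF' H'] := P_of_M M nd iv.
    apply: (NU B0 HB0 M^T (-1) (And3 rf' rF' H')).
    by rewrite trmxK scaleN1r ((alt_T M two).1 al) opprK.
- by move=> B1 HB1; rewrite na; exact: (NU B1 HB1 P a HP PT).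
Qed.
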